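(* Let $\mathcal I,\mathcal J$ be ideals on $\omega$ with $\mathcal I\subseteq\mathcal J$. For every cardinal $\kappa\le\mathfrak c$ there exists a Hausdorff, separable, sequentially compact, compact (hence normal) space $X$ with $|X|=\kappa$ such that only countably many points of $X$ are isolated and for every sequence $(f_n)$ in $\mathcal C(X)$, if $(f_n)$ is $\mathcal I$-pointwise convergent to $0$ then $(f_n)$ is $\mathcal J$-$\sigma$-uniformly convergent to $0$.
   Context: $\mathfrak c$ denotes the cardinality of $\mathbb R$. An ideal on $\omega$ is a family $\mathcal I\subseteq\mathcal P(\omega)$ closed under finite unions and subsets, containing all finite sets, with $\omega\notin\mathcal I$. A real sequence $(a_n)$ is $\mathcal I$-convergent to $0$ if $\{n:|a_n|\ge\varepsilon\}\in\mathcal I$ for all $\varepsilon>0$. For a sequence $(f_n)$ of real functions on a set $X$: $\mathcal I$-pointwise convergence to $0$ means $(f_n(x))$ is $\mathcal I$-convergent to $0$ for each $x$; $\mathcal J$-uniform means $\{n:\exists x\in X\,(|f_n(x)|\ge\varepsilon)\}\in\mathcal J$ for each $\varepsilon>0$; $\mathcal J$-$\sigma$-uniform means $X=\bigcup_{k\in\omega}X_k$ with $(f_n\restriction X_k)$ $\mathcal J$-uniformly convergent to $0$ for each $k$. $\mathcal C(X)$ = continuous real functions on $X$. *)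

(* Defs.v *)
From HB Require Import structures.
From mathcomp Require Import all_boot all_order all_algebra.
From mathcomp Require Import all_classical all_reals all_analysis.
Set Implicit Arguments. Unset Strict Implicit. Unset Printing Implicit Defensive.
Import Order.TTheory GRing.Theory Num.Theory.
Import numFieldNormedType.Exports.
Local Open Scope classical_set_scope.
Local Open Scope ring_scope.

Definition ideal (I : set (set nat)) : Prop :=
  (forall A B, I A -> I B -> I (A `|` B)) /\
  (forall A B, B `<=` A -> I A -> I B) /\
  (forall A, finite_set A -> I A) /\
  ~ I setT.

Definition Iconv0 (R : realType) (I : set (set nat)) (a : nat -> R) : Prop :=
  forall eps : R, 0 < eps -> I [set n | eps <= `|a n|].

Definition Ipointwise0 (R : realType) (X : Type) (I : set (set nat))
  (f : nat -> X -> R) : Prop :=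
  forall x : X, Iconv0 I (fun n => f n x).

Definition Juniform0_on (R : realType) (X : Type) (J : set (set nat))
  (f : nat -> X -> R) (Y : set X) : Prop :=
  forall eps : R, 0 < eps -> J [set n | exists2 x, Y x & eps <= `|f n x|].

Definition Jsigma_uniform0 (R : realType) (X : Type) (J : set (set nat))
  (f : nat -> X -> R) : Prop :=
  exists Xk : nat -> set X,
    \bigcup_k Xk k = setT /\ forall k, Juniform0_on J f (Xk k).

Definition separable_space (X : topologicalType) : Prop :=
  exists2 D : set X, countable D & closure D = setT.

Definition seq_compact_space (X : topologicalType) : Prop :=
  forall u : nat -> X, exists phi : nat -> nat,
    (forall n, (phi n < phi n.+1)%N) /\ exists x : X, (u \o phi) @ \oo --> x.

(* Main.v *)
Require Import Defs.
From HB Require Import structures.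
From mathcomp Require Import all_boot all_order all_algebra.
From mathcomp Require Import all_classical all_reals all_analysis.
Import Order.TTheory GRing.Theory Num.Theory.
Import numFieldNormedType.Exports.
Local Open Scope classical_set_scope.
Local Open Scope ring_scope.
Set Implicit Arguments. Unset Strict Implicit. Unset Printing Implicit Defensive.
From mathcomp Require Import finmap.
From mathcomp Require Import lra.

Definition psiop (T : choiceType) (rp inf : T -> Prop) (A : T -> set T) (U : set T) : Prop :=
 (forall r, rp r -> U r -> exists l : seq T, forall y, A r y -> ~ U y -> y \in l) /\
 (forall x, inf x -> U x -> exists l : seq T, forall y, ~ U y ->
     inf y \/ y \in l \/ exists2 r, r \in l & rp r /\ A r y).

Definition psi (T : choiceType) (rp inf : T -> Prop) (A : T -> set T) : Type := T.
HB.instance Definition _ (T : choiceType) rp inf A := Choice.copy (@psi T rp inf A) T.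

Section PsiTop.
Variables (T : choiceType) (rp inf : T -> Prop) (A : T -> set T).
Lemma psiopT : psiop rp inf A setT.
Proof. split => [r _ _|x _ _]; exists [::] => y; last by move/(_ I). by move=> _ /(_ I). Qed.
Lemma psiopI : setI_closed (psiop rp inf A).
Proof.
move=> U V [U1 U2] [V1 V2]; split.
  move=> r rr [Ur Vr]; have [l1 H1] := U1 r rr Ur; have [l2 H2] := V1 r rr Vr.
  exists (l1 ++ l2) => y Ay nUV; rewrite mem_cat.
  have [Uy|nUy] := pselect (U y); last by rewrite H1.
  have [Vy|nVy] := pselect (V y); last by rewrite H2 ?orbT.
  by exfalso; apply: nUV.
move=> x ix [Ux Vx]; have [l1 H1] := U2 x ix Ux; have [l2 H2] := V2 x ix Vx.
exists (l1 ++ l2) => y nUV.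
have [Uy|nUy] := pselect (U y); last first.
  case: (H1 y nUy) => [iy|[yl|[r rl rA]]]; first by left.
    by right; left; rewrite mem_cat yl.
  by right; right; exists r => //; rewrite mem_cat rl.
have [Vy|nVy] := pselect (V y); last first.
  case: (H2 y nVy) => [iy|[yl|[r rl rA]]]; first by left.
    by right; left; rewrite mem_cat yl orbT.
  by right; right; exists r => //; rewrite mem_cat rl orbT.
by exfalso; apply: nUV.
Qed.
Lemma psiopU (I : Type) (f : I -> set T) : (forall i, psiop rp inf A (f i)) ->
    psiop rp inf A (\bigcup_i f i).
Proof.
move=> fo; split.
  move=> r rr [i _ fir]; have [l H] := (fo i).1 r rr fir.
  by exists l => y Ay nU; apply: H => // fiy; apply: nU; exists i.
move=> x ix [i _ fx]; have [l H] := (fo i).2 x ix fx.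
by exists l => y nU; apply: H => fiy; apply: nU; exists i.
Qed.
End PsiTop.

HB.instance Definition _ (T : choiceType) rp inf A :=
  isOpenTopological.Build (@psi T rp inf A) (@psiopT T rp inf A) (@psiopI T rp inf A) (@psiopU T rp inf A).

Lemma openE (T : choiceType) rp inf A (U : set (@psi T rp inf A)) : open U = psiop rp inf A U.
Proof. by []. Qed.

Section Gen.
Variables (T : choiceType) (rp inf : T -> Prop) (A : T -> set T).
Notation X := (@psi T rp inf A).
Hypothesis Hinf1 : forall x y, inf x -> inf y -> x = y.
Hypothesis Hri : forall x, rp x -> ~ inf x.
Hypothesis HA : forall r y, A r y -> ~ rp y /\ ~ inf y.
Hypothesis HAd : forall r s, rp r -> rp s -> r <> s ->
  exists l : seq T, forall y, A r y -> A s y -> y \in l.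
Hypothesis HAinf : forall r, rp r -> forall l : seq T, exists y, A r y /\ y \notin l.

Lemma open_single (p : X) : ~ rp p -> ~ inf p -> open [set p].
Proof.
move=> np ip; rewrite openE; split; first by move=> r rr /= rp'; subst r.
by move=> x ix /= xp; subst x.
Qed.

Lemma open_csingle (p : X) : ~ rp p -> ~ inf p -> open (~` [set p]).
Proof.
move=> np ip; rewrite openE; split.
  by move=> r _ _; exists [:: p] => y _ /= /contrapT ->; rewrite mem_head.
by move=> x _ _; exists [:: p] => y /= /contrapT ->; right; left; rewrite mem_head.
Qed.

Definition V (r : T) : set X := [set r] `|` A r.

Lemma open_V (r : X) : rp r -> open (V r).
Proof.
move=> rr; rewrite openE; split.
  move=> r' rr' [/= ->|/HA [] //]; exists [::] => y Ay; case; by right.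
by move=> x ix [/= xr|/HA [] //]; subst x; case: (Hri rr).
Qed.

Lemma open_cV (r : X) : rp r -> open (~` V r).
Proof.
move=> rr; rewrite openE; split.
  move=> s rs nVs; have sr : s <> r by move=> e; apply: nVs; left.
  have [l Hl] := HAd rs rr sr; exists l => y Asy /contrapT [/= yr|Ary].
    by subst y; case: (HA Asy).
  exact: Hl.
move=> x _ _; exists [:: r] => y /contrapT [/= ->|Ary].
  by right; left; rewrite mem_head.
by right; right; exists r => //; rewrite mem_head.
Qed.

Lemma open_W (r s : X) : rp r -> rp s -> r <> s -> open (V s `\` (A r : set X)).
Proof.
move=> rr rs rs'; rewrite openE; split.
  move=> r' rr' [[/= ->|/HA [] //] _].
  have [l Hl] := HAd rs rr (nesym rs'); exists l => y Asy nW.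
  apply: Hl => //; apply: contrapT => nAr; apply: nW; split => //; by right.
move=> x ix [[/= xs|/HA [] //] _]; subst x; by case: (Hri rs).
Qed.

Lemma psi_hausdorff : hausdorff_space X.
Proof.
rewrite open_hausdorff => x y /eqP xy.
have Hpair : forall U W : set X, open U -> open W -> U x -> W y -> U `&` W = set0 ->
   exists2 AB : set X * set X, (x \in AB.1 /\ y \in AB.2) &
     [/\ open AB.1, open AB.2 & AB.1 `&` AB.2 == set0].
  move=> U W oU oW Ux Wy UW; exists (U, W) => /=.
    by split; apply/mem_set.
  by split => //; apply/eqP.
have [rx|nrx] := pselect (rp x); last have [ix|nix] := pselect (inf x).
- have [ry|nry] := pselect (rp y); last have [iy|niy] := pselect (inf y).
  + apply: (Hpair (V x) (V y `\` (A x : set X))); [exact: open_V|exact: open_W|by left| |].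
      by split; [left|move=> /HA []].
    rewrite predeqE => z; split => // -[[/= zx|Axz] [[/= zy|Ayz] nAz]] //.
    * by subst; apply: xy.
    * by subst z; case: (HA Ayz).
  + apply: (Hpair (V x) (~` V x)); [exact: open_V|exact: open_cV|by left| |].
      by move=> [/= e|/HA [] //]; apply: xy.
    by rewrite predeqE => z; split => // -[].
  + apply: (Hpair (~` [set y]) [set y]); [exact: open_csingle|exact: open_single| | |].
    * by move=> /= e; apply: xy.
    * by [].
    * by rewrite predeqE => z; split => // -[] nzy /= zy; apply: nzy.
- have [ry|nry] := pselect (rp y); last have [iy|niy] := pselect (inf y).
  + apply: (Hpair (~` V y) (V y)); [exact: open_cV|exact: open_V| |by left|].
    * by move=> [/= e|/HA [] //]; apply: xy.
    * by rewrite predeqE => z; split => // -[].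
  + by case: xy; apply: Hinf1.
  + apply: (Hpair (~` [set y]) [set y]); [exact: open_csingle|exact: open_single| | |].
    * by move=> /= e; apply: xy.
    * by [].
    * by rewrite predeqE => z; split => // -[] nzy /= zy; apply: nzy.
- apply: (Hpair [set x] (~` [set x])); [exact: open_single|exact: open_csingle|by []| |].
  * by move=> /= e; apply: xy.
  * by rewrite predeqE => z; split => // -[/= -> ].
Qed.

Lemma psi_closure : closure [set x : X | ~ rp x] = setT.
Proof.
rewrite predeqE => x; split => // _.
have [rx|nrx] := pselect (rp x); last exact: subset_closure.
move=> B; rewrite nbhsE => -[U [oU Ux] UB].
move: oU; rewrite openE => -[/(_ x rx Ux) [l Hl] _].
have [y [Axy yl]] := HAinf rx l.
exists y; split; first by case: (HA Axy).
apply: UB; apply: contrapT => nU; by rewrite (Hl y Axy nU) in yl.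
Qed.

Lemma psi_isolated : isolated [set: X] `<=` [set x | ~ rp x].
Proof.
move=> x [_ [B]]; rewrite nbhsE => -[U [oU Ux] UB] BT rx.
move: oU; rewrite openE => -[/(_ x rx Ux) [l Hl] _].
have [y [Axy yl]] := HAinf rx l.
have Uy : U y by apply: contrapT => nU; rewrite (Hl y Axy nU) in yl.
have : (B `&` setT) y by split => //; apply: UB.
rewrite BT /= => yx; subst y; by case: (HA Axy).
Qed.
End Gen.


Lemma ev_list (U : eqType) (P : U -> nat -> Prop) (l : seq U) :
  (forall x, x \in l -> exists m, forall n, (m <= n)%N -> P x n) ->
  exists m, forall x, x \in l -> forall n, (m <= n)%N -> P x n.
Proof.
elim: l => [|a l IH] H; first by exists 0%N.
have [m1 H1] := H a (mem_head _ _).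
have [m2 H2] : exists m, forall x, x \in l -> forall n, (m <= n)%N -> P x n.
  by apply: IH => x xl; apply: H; rewrite inE xl orbT.
exists (maxn m1 m2) => x; rewrite inE => /orP [/eqP ->|xl] n; rewrite geq_max => /andP [h1 h2].
  exact: H1.
exact: H2.
Qed.

Lemma subseq_inf (S : nat -> Prop) : (forall m, exists n, (m <= n)%N /\ S n) ->
  exists phi : nat -> nat, (forall k, (phi k < phi k.+1)%N) /\ (forall k, S (phi k)) /\
     (forall k, (k <= phi k)%N).
Proof.
move=> H; have [g Hg] := choice H.
pose phi := fix phi k := if k is k'.+1 then g (phi k').+1 else g 0%N.
exists phi; split; [|split].
- by move=> k /=; exact: (Hg _).1.
- by case => [|k] /=; exact: (Hg _).2.
- elim => [|k IH] //=; apply: leq_trans (Hg _).1; by rewrite ltnS.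
Qed.

Lemma cvg_nat_from (Y : topologicalType) (v : nat -> Y) (y : Y) :
 (forall B, nbhs y B -> exists M, forall n, (M <= n)%N -> B (v n)) -> v @ \oo --> y.
Proof. move=> H B /H [M HM]; exists M => // n; exact: HM. Qed.

Section Gen2.
Variables (T : choiceType) (rp inf : T -> Prop) (A : T -> set T).
Notation X := (@psi T rp inf A).
Hypothesis Hinf1 : forall x y, inf x -> inf y -> x = y.
Hypothesis Hri : forall x, rp x -> ~ inf x.
Hypothesis HA : forall r y, A r y -> ~ rp y /\ ~ inf y.
Hypothesis Hcase : (exists l : seq T, forall x, x \in l) \/ (exists x0, inf x0).

Lemma psi_pcover (U : X -> set X) : (forall x, open (U x) /\ U x x) ->
  exists l : seq X, forall y, exists2 x, x \in l & U x y.
Proof.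
move=> HU.
case: Hcase => [[l Hl]|[x0 ix0]].
  by exists l => y; exists y; [exact: Hl|exact: (HU y).2].
have [s Hs] := ((HU x0).1 : psiop rp inf A _).2 x0 ix0 (HU x0).2.
have /choice [t Ht] : forall r : X, exists l : seq X, rp r -> forall y, A r y -> ~ U r y -> y \in l.
  move=> r; have [rr|nrr] := pselect (rp r); last by exists [::].
  have [l Hl] := ((HU r).1 : psiop rp inf A _).1 r rr (HU r).2.
  by exists l.
exists (x0 :: s ++ flatten (map t s)) => y.
have [Uy|nUy] := pselect (U x0 y); first by exists x0; rewrite ?mem_head.
case: (Hs y nUy) => [iy|[ys|[r rs [rr Ary]]]].
- by exists x0; rewrite ?mem_head // -(Hinf1 iy ix0); exact: (HU y).2.
- by exists y; [rewrite inE mem_cat ys orbT|exact: (HU y).2].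
- have [Ury|nUry] := pselect (U r y).
    by exists r => //; rewrite inE mem_cat rs orbT.
  exists y; last exact: (HU y).2.
  rewrite inE mem_cat; apply/orP; right; apply/orP; right.
  by apply/flatten_mapP; exists r => //; apply: Ht.
Qed.

Lemma psi_compact : compact [set: X].
Proof.
move=> F FF _; apply: contrapT => Hn.
have Hp : forall p : X, exists AU : set X * set X, [/\ F AU.1, open AU.2, AU.2 p & AU.1 `&` AU.2 = set0].
  move=> p; apply: contrapT => Hq; apply: Hn; exists p; split => // B C FB.
  rewrite nbhsE => -[U [oU Up] UC]; apply: contrapT => nBC.
  apply: Hq; exists (B, U); split => //=; rewrite predeqE => z; split => // -[Bz Uz].
  by apply: nBC; exists z; split => //; apply: UC.
have [h Hh] := choice Hp.
have [l Hl] := psi_pcover (U := fun p => (h p).2) (fun x => let: And4 _ o px _ := Hh x in conj o px).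
have : F (\bigcap_(x in [set x | x \in l]) (h x).1).
  elim: l {Hl} => [|a l IH].
    by apply: filterS filterT => x _ y /=; rewrite in_nil.
  have [Fa _ _ _] := Hh a.
  apply: filterS (filterI Fa IH) => x [Ha Hl'] y /=; rewrite inE => /orP [/eqP ->|yl] //.
  exact: Hl'.
move=> /filter_ex [y Hy]; have [x xl Uxy] := Hl y.
have : ((h x).1 `&` (h x).2) y by split => //; exact: Hy.
by case: (Hh x) => _ _ _ ->.
Qed.

Lemma psi_seq_compact : seq_compact_space X.
Proof.
move=> u.
have [[x Hx]|Hnot] := pselect (exists x : X, forall m, exists n, (m <= n)%N /\ u n = x).
  have [phi [Hphi [Sphi _]]] := subseq_inf Hx.
  exists phi; split => //; exists x.
  have -> : u \o phi = cst x by apply: funext => k /=; exact: Sphi.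
  exact: cvg_cst.
have Hf : forall x, exists m, forall n, (m <= n)%N -> u n <> x.
  move=> x; apply: contrapT => H; apply: Hnot; exists x => m; apply: contrapT => H2.
  by apply: H; exists m => n mn e; apply: H2; exists n.
case: Hcase => [[l Hl]|[x0 ix0]].
  have [M HM] := @ev_list _ (fun x n => u n <> x) l (fun x _ => Hf x).
  by case: (HM (u M) (Hl _) M (leqnn M)).
have [[r [rr Hr]]|Hn] := pselect (exists r, rp r /\ forall m, exists n, (m <= n)%N /\ A r (u n)).
  have [phi [Hphi [Sphi phik]]] := subseq_inf Hr.
  exists phi; split => //; exists r; apply: cvg_nat_from => B.
  rewrite nbhsE => -[U [oU Ur] UB].
  have [l Hl] := (oU : psiop rp inf A _).1 r rr Ur.
  have [M HM] := @ev_list _ (fun x n => u n <> x) l (fun x _ => Hf x).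
  exists M => k Mk; apply: UB; apply: contrapT => nU.
  exact: (HM _ (Hl _ (Sphi k) nU) (phi k) (leq_trans Mk (phik k))).
have Hn' : forall r, rp r -> exists m, forall n, (m <= n)%N -> ~ A r (u n).
  move=> r rr; apply: contrapT => H; apply: Hn; exists r; split => // m.
  by apply: contrapT => H2; apply: H; exists m => n mn e; apply: H2; exists n.
exists id; split => //; exists x0; apply: cvg_nat_from => B.
rewrite nbhsE => -[U [oU Ux0] UB].
have [s Hs] := (oU : psiop rp inf A _).2 x0 ix0 Ux0.
have Hev : forall y, y \in s -> exists m, forall n, (m <= n)%N -> u n <> y /\ (rp y -> ~ A y (u n)).
  move=> y _; have [m1 H1] := Hf y.
  have [rr|nrr] := pselect (rp y).
    have [m2 H2] := Hn' y rr.
    exists (maxn m1 m2) => n; rewrite geq_max => /andP [h1 h2]; split; first exact: H1.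
    by move=> _; apply: H2.
  by exists m1 => n h1; split; [exact: H1|].
have [M HM] := @ev_list _ (fun y n => u n <> y /\ (rp y -> ~ A y (u n))) s Hev.
have [M0 HM0] := Hf x0.
exists (maxn M M0) => n; rewrite geq_max => /andP [h1 h2]; apply: UB.
apply: contrapT => nU; case: (Hs _ nU) => [iu|[us|[r rs [rr Aru]]]].
- exact: (HM0 n h2 (Hinf1 iu ix0)).
- exact: ((HM _ us n h1).1 erefl).
- exact: ((HM _ rs n h1).2 rr Aru).
Qed.
End Gen2.


Lemma sigma_gen (Y : Type) (R : realType) (I J : set (set nat)) (hJ : ideal J)
  (hIJ : I `<=` J) (f : nat -> Y -> R) (C : set Y) : countable C ->
  (forall x y, ~ C x -> ~ C y -> forall n, f n x = f n y) ->
  Ipointwise0 I f -> Jsigma_uniform0 J f.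
Proof.
move=> /countable_injP [c cinj] Hout Hp.
have J0 : J set0 by apply: hJ.2.2.1; exact: finite_set0.
exists (fun k => if k is k'.+1 then [set x | C x /\ c x = k'] else ~` C); split.
  rewrite predeqE => x; split => // _.
  have [Cx|nCx] := pselect (C x); first by exists (c x).+1.
  by exists 0%N.
case => [|k] eps eps0.
  have [[x0 nC0]|none] := pselect (exists x, ~ C x).
    apply: (hJ.2.1 _ _ _ (hIJ _ (Hp x0 eps eps0))) => n [x nCx] /=.
    by rewrite (Hout x x0).
  apply: (hJ.2.1 _ _ _ J0) => n [x nCx _]; apply: none; by exists x.
have [[x0 [C0 c0]]|none] := pselect (exists x, C x /\ c x = k).
  apply: (hJ.2.1 _ _ _ (hIJ _ (Hp x0 eps eps0))) => n [x [Cx cx]] /=.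
  have -> // : x0 = x by apply: cinj; rewrite ?inE ?c0 ?cx //; apply/mem_set.
apply: (hJ.2.1 _ _ _ J0) => n [x Cx _]; apply: none; by exists x.
Qed.

Lemma countable_seq (U : choiceType) (l : seq U) : countable [set x | x \in l].
Proof.
apply/countable_injP; exists (index^~ l) => x y; rewrite !in_setE => xl yl.
exact: index_inj xl yl.
Qed.

Section Gen3.
Variables (T : choiceType) (rp inf : T -> Prop) (A : T -> set T).
Notation X := (@psi T rp inf A).
Hypothesis Hri : forall x, rp x -> ~ inf x.
Hypothesis HA : forall r y, A r y -> ~ rp y /\ ~ inf y.
Hypothesis Hcase : (exists l : seq T, forall x, x \in l) \/ (exists x0, inf x0).
Hypothesis Hcnt : countable [set x : T | ~ rp x].

Lemma psi_fun (R : realType) (I J : set (set nat)) (hJ : ideal J) (hIJ : I `<=` J)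
  (f : nat -> X -> R) : (forall n, continuous (f n)) -> Ipointwise0 I f -> Jsigma_uniform0 J f.
Proof.
move=> cf Hp.
case: Hcase => [[l Hl]|[x0 ix0]].
  apply: (sigma_gen hJ hIJ (C := setT)); [|by move=> x y /(_ Logic.I)|exact: Hp].
  by apply: sub_countable (countable_seq l); apply: subset_card_le => x _; exact: Hl.
apply: (sigma_gen hJ hIJ (C := [set x | exists n, f n x <> f n x0])) => //; last first.
  move=> x y nx ny n.
  have ex : f n x = f n x0 by apply: contrapT => h; apply: nx; exists n.
  have ey : f n y = f n x0 by apply: contrapT => h; apply: ny; exists n.
  by rewrite ex ey.
have Hl : forall nm : nat * nat, exists l : seq X, forall x, rp x ->
    (nm.2.+1%:R^-1 <= `|f nm.1 x - f nm.1 x0|) -> x \in l.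
  move=> [n m] /=.
  have := cf n x0 (ball (f n x0) (m.+1%:R^-1)) (nbhsx_ballx _ _ _).
  move=> /(_ _) H; have {H} := H; rewrite invr_gt0 ltr0n => /(_ erefl).
  rewrite /= nbhsE => -[U [oU Ux0] UB].
  have [s Hs] := (oU : psiop rp inf A _).2 x0 ix0 Ux0.
  exists s => x rx hx.
  have [Ux|nUx] := pselect (U x).
    have := UB x Ux; rewrite /ball /= distrC => h.
    by move: (lt_le_trans h hx); rewrite ltxx.
  case: (Hs x nUx) => [ix|[//|[r _ [_ /HA [] //]]]]; case: (Hri rx ix).
have /choice [s Hs] := Hl.
pose G (o : option (nat * nat)) : set X :=
  if o is Some nm then [set x | x \in s nm] else [set x | ~ rp x].
apply: (@sub_countable _ _ _ (\bigcup_(o in setT) G o)).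
  apply: subset_card_le => x [n hn].
  have [rx|nrx] := pselect (rp x); last by exists None.
  have d0 : 0 < `|f n x - f n x0| by rewrite normr_gt0 subr_eq0; apply/eqP.
  have [M _ HM] := near_infty_natSinv_lt (PosNum d0).
  exists (Some (n, M)) => //=; apply: Hs => //=; apply: ltW; exact: (HM M (leqnn M)).
apply: bigcup_countable => // -[nm|] _ /=; first exact: countable_seq.
exact: Hcnt.
Qed.
End Gen3.


Lemma psi_main (R : realType) (I J : set (set nat))
  (hI : ideal I) (hJ : ideal J) (hIJ : I `<=` J) (K : set R)
  (rp inf : K -> Prop) (A : K -> set K)
  (Hinf1 : forall x y, inf x -> inf y -> x = y)
  (Hri : forall x, rp x -> ~ inf x)
  (HA : forall r y, A r y -> ~ rp y /\ ~ inf y)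
  (HAd : forall r s, rp r -> rp s -> r <> s ->
     exists l : seq K, forall y, A r y -> A s y -> y \in l)
  (HAinf : forall r, rp r -> forall l : seq K, exists y, A r y /\ y \notin l)
  (Hcase : (exists l : seq K, forall x, x \in l) \/ (exists x0, inf x0))
  (Hcnt : countable [set x : K | ~ rp x]) :
  exists X : topologicalType,
    [/\ hausdorff_space X, separable_space X, seq_compact_space X,
        compact [set: X] &
        ([set: X] #= K)%card] /\
    countable (isolated [set: X]) /\
        (
        forall f : nat -> X -> R,
          (forall n, continuous (f n)) ->
          Ipointwise0 I f -> Jsigma_uniform0 J f).
Proof.
exists (@psi _ rp inf A); split; [split|split].
- exact: psi_hausdorff.
- exists [set x | ~ rp x] => //; exact: psi_closure.
- exact: psi_seq_compact.
- exact: psi_compact.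
- exact: card_setT.
- apply: sub_countable Hcnt; apply: subset_card_le; exact: psi_isolated.
- move=> f; exact: psi_fun.
Qed.


Lemma fin_list (R : realType) (K : set R) : finite_set K -> exists l : seq K, forall x, x \in l.
Proof.
move=> fK.
have : finite_set [set: K] by rewrite (eq_finite_set (card_setT K)).
move=> /finite_seqP [X0 HX]; exists X0 => x.
have : [set: K] x by [].
by rewrite HX.
Qed.

Lemma inj_notin (U : eqType) (g : nat -> U) : injective g ->
  forall l : seq U, exists n, g n \notin l.
Proof.
move=> gi l; apply: contrapT => H.
have Hall : forall n, g n \in l.
  by move=> n; apply: contrapT => /negP Hn; apply: H; exists n.
have Hs : (size (map g (iota 0 (size l).+1)) <= size l)%N.
  apply: uniq_leq_size; first by rewrite map_inj_uniq ?iota_uniq.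
  by move=> y /mapP [n _ ->].
by rewrite size_map size_iota ltnn in Hs.
Qed.

Lemma floor_close (R : realType) (a b : R) : Num.floor a = Num.floor b -> `|a - b| < 1.
Proof.
move=> e; have := floor_itv a; have := floor_itv b.
rewrite -e intrD /=; set z := (Num.floor a)%:~R.
move=> /andP [h1 h2] /andP [h3 h4].
rewrite ltr_norml; apply/andP; split; lra.
Qed.

Lemma case_fin (R : realType) (I J : set (set nat))
  (hI : ideal I) (hJ : ideal J) (hIJ : I `<=` J) (K : set R) : finite_set K ->
  exists X : topologicalType,
    [/\ hausdorff_space X, separable_space X, seq_compact_space X,
        compact [set: X] &
        ([set: X] #= K)%card] /\
    countable (isolated [set: X]) /\
        (
        forall f : nat -> X -> R,
          (forall n, continuous (f n)) ->
          Ipointwise0 I f -> Jsigma_uniform0 J f).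
Proof.
move=> /fin_list [l Hl].
apply: (@psi_main R I J hI hJ hIJ K (fun _ => False) (fun _ => False) (fun _ _ => False)) => //.
- by left; exists l.
- apply: sub_countable (countable_seq l); apply: subset_card_le => x _; exact: Hl.
Qed.


Lemma case_inf (R : realType) (I J : set (set nat))
  (hI : ideal I) (hJ : ideal J) (hIJ : I `<=` J) (K : set R) : ~ finite_set K ->
  exists X : topologicalType,
    [/\ hausdorff_space X, separable_space X, seq_compact_space X,
        compact [set: X] &
        ([set: X] #= K)%card] /\
    countable (isolated [set: X]) /\
        (
        forall f : nat -> X -> R,
          (forall n, continuous (f n)) ->
          Ipointwise0 I f -> Jsigma_uniform0 J f).
Proof.
move=> /infiniteP /pcard_leP [f].
have fK n : K (f n) := @funS _ _ _ _ f n Logic.I.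
have finj : injective f by exact: injT.
pose e (n : nat) : K := exist (fun x => x \in K) (f n) (mem_set (fK n)).
pose code (r : K) (n : nat) : nat := (choice.pickle (n, Num.floor (val r * n.+1%:R))).+1.
have codeinj : forall r s n m, code r n = code s m ->
    n = m /\ Num.floor (val r * n.+1%:R) = Num.floor (val s * m.+1%:R).
  move=> r s n m [] /(pcan_inj choice.pickleK_inv) [-> ->]; by [].
apply: (@psi_main R I J hI hJ hIJ K (fun x => forall n, val x <> f n)
   (fun x => val x = f 0%N) (fun r y => exists n, val y = f (code r n))).
- by move=> x y hx hy; apply: val_inj; rewrite hx hy.
- by move=> x rx ix; apply: (rx 0%N).
- move=> r y [n hy]; split; first by move/(_ (code r n)).
  by rewrite hy => /finj.
- move=> r s rr rs rs'.
  have vrs : val r <> val s by move=> /val_inj.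
  have d0 : 0 < `|val r - val s| by rewrite normr_gt0 subr_eq0; apply/eqP.
  have [N _ HN] := near_infty_natSinv_lt (PosNum d0).
  exists (map (fun n => e (code r n)) (iota 0 N)) => y [n hy] [m hy'].
  move: hy'; rewrite hy => /finj /codeinj [nm hf]; subst m.
  have nN : (n < N)%N.
    rewrite ltnNge; apply/negP => Nn.
    have := HN n Nn; rewrite /= => hlt.
    have := floor_close hf; rewrite -mulrBl normrM normr_nat => hlt2.
    have np : 0 < n.+1%:R :> R by rewrite ltr0n.
    have : 1 < `|val r - val s| * n.+1%:R.
      by rewrite -ltr_pdivrMr // div1r.
    by rewrite ltNge (ltW hlt2).
  apply/mapP; exists n; first by rewrite mem_iota.
  by apply: val_inj; rewrite hy.
- move=> r rr l.
  have ginj : injective (fun n => e (code r n)).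
    by move=> n m /(congr1 val) /finj /codeinj [].
  have [n hn] := inj_notin ginj l.
  by exists (e (code r n)); split => //; exists n.
- by right; exists (e 0%N).
- apply: (@sub_countable _ _ _ (e @` [set: nat])); last exact: card_image_le.
  apply: subset_card_le => x nrx.
  have [n hn] : exists n, val x = f n.
    by apply: contrapT => H; apply: nrx => n hn; apply: H; exists n.
  by exists n => //; apply: val_inj.
Qed.

Unset Implicit Arguments.
Theorem theorem6p4 (R : realType) (I J : set (set nat))
  (hI : ideal I) (hJ : ideal J) (hIJ : I `<=` J) (K : set R) :
  exists X : topologicalType,
    [/\ hausdorff_space X, separable_space X, seq_compact_space X,
        compact [set: X] &
        ([set: X] #= K)%card] /\
    countable (isolated [set: X]) /\
        (
        forall f : nat -> X -> R,
          (forall n, continuous (f n)) ->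
          Ipointwise0 I f -> Jsigma_uniform0 J f).
Proof.
have [fK|nfK] := pselect (finite_set K).
  exact: case_fin.
exact: case_inf.
Qed.
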